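(* Let $G$ be a graph with a type-2A 1-planar drawing $D$, and let $S$ be a vertex-cut of $G$. Then: (i) for any two distinct components $F$ and $F'$ of $G-S$, if $ab\in E(F)$ and $cd$ is an edge with one endvertex in $S$ and the other in $V(F')$, then $ab$ and $cd$ do not cross in $D$; and (ii) any two edges belonging to distinct components of $G-S$ do not cross each other in $D$.
   Context: All drawings are good (no edge crosses itself, two edges cross at most once, adjacent edges do not cross). A drawing is 1-planar if every edge is crossed at most once. If edges $ab$ and $cd$ cross in a 1-planar drawing of $G$, the associated edges of this crossing are the edges of $G[\{a,b,c,d\}]$ other than $ab$ and $cd$. A 1-planar drawing is type-2A if every crossing has at least two associated edges, and every crossing with exactly two associated edges has these two edges disjoint. A vertex-cut is a set $S\subseteq V(G)$ with $G-S$ disconnected. *)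

(* Defs.v *)
From HB Require Import structures.
From mathcomp Require Import all_boot all_order all_algebra.
From mathcomp Require Import all_classical all_reals all_analysis.
Set Implicit Arguments. Unset Strict Implicit. Unset Printing Implicit Defensive.
Import Order.TTheory GRing.Theory Num.Theory.
Local Open Scope ring_scope.
Import numFieldNormedType.Exports.

Definition simple_graph (T : finType) (adj : rel T) : Prop :=
  symmetric adj /\ irreflexive adj.

Record drawing (R : realType) (T : finType) (adj : rel T) := Drawing {
  vpos : T -> (R * R)%type;
  arc : T -> T -> R -> (R * R)%type;
  vpos_inj : injective vpos;
  arc_rev : forall a b t, arc b a t = arc a b (1 - t);
  arc_start : forall a b, adj a b -> arc a b 0 = vpos a;
  arc_end : forall a b, adj a b -> arc a b 1 = vpos b;
  arc_cont : forall a b, adj a b ->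
    ({within `[0%R, 1%R], continuous (arc a b)})%classic;
  arc_simple : forall a b s t, adj a b -> 0 <= s <= 1 -> 0 <= t <= 1 ->
    arc a b s = arc a b t -> s = t;
  arc_avoid : forall a b x t, adj a b -> 0 < t < 1 -> arc a b t <> vpos x
}.

Definition cross_at (R : realType) (T : finType) (adj : rel T)
  (D : drawing R adj) (a b c d : T) (p : (R * R)%type) : Prop :=
  adj a b /\ adj c d /\ [set a; b] != [set c; d] /\
  exists s t, [/\ 0 < s < 1, 0 < t < 1, arc D a b s = p & arc D c d t = p].

Definition cross (R : realType) (T : finType) (adj : rel T)
  (D : drawing R adj) (a b c d : T) : Prop :=
  exists p, cross_at D a b c d p.

(* Good drawing: adjacent edges do not cross, and two edges cross at most
   once (in at most one point).  (No edge crosses itself: arc_simple.) *)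
Definition good (R : realType) (T : finType) (adj : rel T)
  (D : drawing R adj) : Prop :=
  (forall a b c d, cross D a b c d ->
     [disjoint [set a; b] & [set c; d]]) /\
  (forall a b c d p q, cross_at D a b c d p -> cross_at D a b c d q -> p = q).

Definition one_planar (R : realType) (T : finType) (adj : rel T)
  (D : drawing R adj) : Prop :=
  forall a b c d e f p q, cross_at D a b c d p -> cross_at D a b e f q ->
    p = q /\ [set c; d] = [set e; f].

Definition is_edge (T : finType) (adj : rel T) (e : {set T}) : bool :=
  [exists x, exists y, (e == [set x; y]) && adj x y].

Definition assoc_edges (T : finType) (adj : rel T) (a b c d : T)
  : {set {set T}} :=
  [set e : {set T} | [&& is_edge adj e, e \subset [set a; b; c; d],
                        e != [set a; b] & e != [set c; d]]].

Definition type2A (R : realType) (T : finType) (adj : rel T)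
  (D : drawing R adj) : Prop :=
  good D /\ one_planar D /\
  forall a b c d, cross D a b c d ->
    (2 <= #|assoc_edges adj a b c d|)%N /\
    (#|assoc_edges adj a b c d| = 2%N ->
       forall e1 e2, e1 \in assoc_edges adj a b c d ->
         e2 \in assoc_edges adj a b c d -> e1 != e2 -> [disjoint e1 & e2]).

Definition del_adj (T : finType) (adj : rel T) (S : {set T}) : rel T :=
  fun x y => [&& adj x y, x \notin S & y \notin S].

Definition vertex_cut (T : finType) (adj : rel T) (S : {set T}) : Prop :=
  exists x y, [/\ x \notin S, y \notin S & ~~ connect (del_adj adj S) x y].

(* Main.v *)
Require Import Defs.
From mathcomp Require Import all_boot all_order all_algebra.
From mathcomp Require Import all_classical all_reals all_analysis.

Section Aux.
Variables (T : finType) (adj : rel T) (S : {set T}).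
Hypothesis Hsym : symmetric adj.

Lemma del_sym : symmetric (del_adj adj S).
Proof. by move=> x y; rewrite /del_adj Hsym; case: (adj y x); case: (x \in S); case: (y \in S). Qed.

Lemma conn1 u v : u \notin S -> v \notin S -> adj u v -> connect (del_adj adj S) u v.
Proof. by move=> hu hv huv; apply: connect1; rewrite /del_adj huv hu hv. Qed.

Lemma connS u v : connect (del_adj adj S) u v = connect (del_adj adj S) v u.
Proof. exact: (sym_connect_sym del_sym). Qed.
End Aux.
Arguments conn1 {T adj S u v}.
Arguments connS {T adj S}.

Lemma in4 (T : finType) (a b c d x : T) : x \in [set a; b; c; d] ->
  [\/ x = a, x = b, x = c | x = d].
Proof.
by rewrite !inE -!orbA => /or4P[] /eqP; [constructor 1|constructor 2|constructor 3|constructor 4].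
Qed.

Theorem lemma7 (R : realType) (T : finType) (adj : rel T) (D : drawing R adj)
  (S : {set T}) :
  simple_graph adj -> type2A D -> vertex_cut adj S ->
  (* (i) ab in component F, cd with c in S and d in a different component F' *)
  (forall a b c d,
     a \notin S -> b \notin S -> adj a b ->
     c \in S -> d \notin S -> adj c d ->
     ~~ connect (del_adj adj S) a d ->
     ~ cross D a b c d)
  /\
  (* (ii) edges of distinct components of G - S do not cross *)
  (forall a b c d,
     a \notin S -> b \notin S -> adj a b ->
     c \notin S -> d \notin S -> adj c d ->
     ~~ connect (del_adj adj S) a c ->
     ~ cross D a b c d).
Proof.
move=> [Hsym Hirr] [_ [_ H2A]] _.
have Eba : forall x y : T, [set y; x] = [set x; y] by move=> x y; rewrite finset.setUC.
split.
- move=> a b c d aS bS ab cS dS cd nad Hcr.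
  have [Hge Hdisj] := H2A a b c d Hcr.
  have Cab := conn1 aS bS ab.
  have Fad : adj a d = false.
    apply: negbTE; apply: contra nad; exact: conn1.
  have Fda : adj d a = false by rewrite Hsym.
  have Fbd : adj b d = false.
    apply: negbTE; apply: contra nad => bd.
    exact: connect_trans Cab (conn1 bS dS bd).
  have Fdb : adj d b = false by rewrite Hsym.
  have Fii : forall x, adj x x = false by move=> x; apply: Hirr.
  set A := assoc_edges adj a b c d.
  have sub : A \subset [set [set a; c]; [set b; c]].
    apply/fintype.subsetP => e; rewrite inE => /and4P
      [/existsP[x /existsP[y /andP[/eqP He Hxy]]] Hsub Hne1 Hne2].
    subst e.
    have Hx := @in4 _ _ _ _ _ _ (fintype.subsetP Hsub x (set21 x y)).
    have Hy := @in4 _ _ _ _ _ _ (fintype.subsetP Hsub y (set22 x y)).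
    move: Hxy Hne1 Hne2.
    case: Hx => ->; case: Hy => ->;
      rewrite ?Fii ?Fad ?Fda ?Fbd ?Fdb ?(Eba a b) ?(Eba c d) ?(Eba a c) ?(Eba b c)
        ?eqxx ?set21 ?set22 ?orbT //.
  have Hb2 : (#|[set [set a; c]; [set b; c]]| <= 2)%N.
    by rewrite cards2; case: (_ != _).
  have EA : A = [set [set a; c]; [set b; c]].
    apply/eqP; rewrite -(subset_leqif_cards sub).
    by rewrite eqn_leq (subset_leq_card sub) /=; exact: leq_trans Hb2 Hge.
  have acA : [set a; c] \in A by rewrite EA set21.
  have bcA : [set b; c] \in A by rewrite EA set22.
  have cardA : #|A| = 2%N.
    by apply/eqP; rewrite eqn_leq Hge andbT EA.
  have neq : [set a; c] != [set b; c].
    apply/negP => /eqP E.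
    have : a \in [set b; c] by rewrite -E set21.
    rewrite !inE => /orP[/eqP E1|/eqP E1].
    + by subst b; rewrite Hirr in ab.
    + by subst c; rewrite cS in aS.
  have := Hdisj cardA _ _ acA bcA neq.
  rewrite -setI_eq0 => /eqP /setP /(_ c).
  by rewrite !inE !eqxx !orbT.
- move=> a b c d aS bS ab cS dS cd nac Hcr.
  have [Hge _] := H2A a b c d Hcr.
  have Cab := conn1 aS bS ab.
  have Ccd := conn1 cS dS cd.
  have F : forall x y, (x = a \/ x = b) -> (y = c \/ y = d) ->
      adj x y = false /\ adj y x = false.
    move=> x y Hx Hy.
    have xS : x \notin S by case: Hx => ->.
    have yS : y \notin S by case: Hy => ->.
    have Cax : connect (del_adj adj S) a x by case: Hx => ->.
    have Cyc : connect (del_adj adj S) y c.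
      by case: Hy => ->; rewrite // (connS Hsym).
    have Fxy : adj x y = false.
      apply: negbTE; apply: contra nac => xy.
      exact: connect_trans (connect_trans Cax (conn1 xS yS xy)) Cyc.
    by split; rewrite // Hsym.
  have [Fac Fca] := F a c (or_introl erefl) (or_introl erefl).
  have [Fad Fda] := F a d (or_introl erefl) (or_intror erefl).
  have [Fbc Fcb] := F b c (or_intror erefl) (or_introl erefl).
  have [Fbd Fdb] := F b d (or_intror erefl) (or_intror erefl).
  have Fii : forall x, adj x x = false by move=> x; apply: Hirr.
  set A := assoc_edges adj a b c d.
  have A0 : A = finset.set0.
    apply/setP => e; rewrite finset.in_set0 inE; apply/negP => /and4P
      [/existsP[x /existsP[y /andP[/eqP He Hxy]]] Hsub Hne1 Hne2].
    subst e.
    have Hx := @in4 _ _ _ _ _ _ (fintype.subsetP Hsub x (set21 x y)).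
    have Hy := @in4 _ _ _ _ _ _ (fintype.subsetP Hsub y (set22 x y)).
    move: Hxy Hne1 Hne2.
    case: Hx => ->; case: Hy => ->;
      by rewrite ?Fii ?Fac ?Fca ?Fad ?Fda ?Fbc ?Fcb ?Fbd ?Fdb ?(Eba a b) ?(Eba c d) ?eqxx.
  by move: Hge; rewrite -/A A0 finset.cards0.
Qed.
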